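(* Let $i,j\in\mathbb{N}=\{0,1,2,\dots\}$ and let $w\in\{0,1\}^*$ be a $\frac{7}{3}$-power-free word with $|w|=(7+2j)2^i-1$. Let $a\in\{0,1\}$. Then the word $waw$ has a subword $x$ with $|x|\leq 7\cdot 2^i$ such that $x$ is a $\beta$-power for some rational $\beta\ge\frac{7}{3}$.
   Context: A word $w'$ is a subword of $w$ if $w=uw'v$ for some words $u,v$. For a rational $\beta\ge 1$, a $\beta$-power is a word of the form $y^ny'$ with $y$ a nonempty word, $y'$ a prefix of $y$, $n$ a nonnegative integer and $n+|y'|/|y|=\beta$. A word is $\alpha$-power-free if none of its subwords is a $\beta$-power for any rational $\beta\geq\alpha$. *)

(* Defs.v *)
From mathcomp Require Import all_boot all_order all_algebra.
Set Implicit Arguments. Unset Strict Implicit. Unset Printing Implicit Defensive.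
Import Order.TTheory GRing.Theory Num.Theory.

Definition subword (x w : seq bool) : bool := infix x w.

Definition is_power (x : seq bool) (beta : rat) : Prop :=
  exists (y y' : seq bool) (n : nat),
    [/\ y != [::], prefix y' y,
        x = flatten (nseq n y) ++ y' &
        beta = (n%:R + (size y')%:R / (size y)%:R)%R].

Definition power_free (alpha : rat) (w : seq bool) : Prop :=
  forall (x : seq bool) (beta : rat), subword x w -> (alpha <= beta)%R -> ~ is_power x beta.

(* Main.v *)
Require Import Defs.
From mathcomp Require Import all_boot all_order all_algebra.
From mathcomp Require Import zify.
From Stdlib Require Import Classical_Prop.
Import Order.TTheory GRing.Theory Num.Theory.

Definition mu (s : seq bool) : seq bool := flatten [seq [:: c; ~~ c] | c <- s].

Lemma mu_cat s1 s2 : mu (s1 ++ s2) = mu s1 ++ mu s2.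
Proof. by rewrite /mu map_cat flatten_cat. Qed.

Lemma size_mu s : size (mu s) = 2 * size s.
Proof. elim: s => //= c s IH; rewrite /mu /= in IH *; rewrite IH; lia. Qed.

Lemma mu_nseq n y : mu (flatten (nseq n y)) = flatten (nseq n (mu y)).
Proof. elim: n => //= n IH; by rewrite mu_cat IH. Qed.

Lemma mu_infix {x y} : infix x y -> infix (mu x) (mu y).
Proof. move=> /infixP [s [s' ->]]; rewrite !mu_cat; exact: infix_infix. Qed.

Lemma mu_prefix x y : prefix x y -> prefix (mu x) (mu y).
Proof. move=> /prefixP [s ->]; rewrite mu_cat; exact: prefix_prefix. Qed.

Lemma mu_power x b : is_power x b -> is_power (mu x) b.
Proof.
move=> [y [y' [n [Hy Hp Hx Hb]]]]; exists (mu y), (mu y'), n; split.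
- by move: Hy; case: (y).
- exact: mu_prefix.
- by rewrite Hx mu_cat mu_nseq.
- rewrite Hb !size_mu !natrM -mulf_div divff ?mul1r //.
Qed.

Lemma pf_mu a w u : power_free a w -> infix (mu u) w -> power_free a u.
Proof.
move=> Hw Hu x b; rewrite /subword => Hx Hab Hp; apply: (Hw (mu x) b) => //.
- exact: (infix_trans (mu_infix Hx) Hu).
- exact: mu_power.
Qed.

Lemma pow3 c : is_power [:: c; c; c] (3%:R).
Proof. by exists [:: c], [::], 3; split => //=. Qed.
Lemma pow5 c d : is_power [:: c; d; c; d; c] (5%:R / 2%:R).
Proof. exists [:: c; d], [:: c], 2; split => //=; by rewrite eqxx. Qed.
Lemma pow7 c d e : is_power [:: c; d; e; c; d; e; c] (7%:R / 3%:R).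
Proof. exists [:: c; d; e], [:: c], 2; split => //=; by rewrite eqxx. Qed.

Lemma factor {s t L} : t + L <= size s ->
  infix (mkseq (fun k => nth false s (t + k)) L) s.
Proof.
move=> HL.
have -> : mkseq (fun k => nth false s (t + k)) L = take L (drop t s).
  apply: (@eq_from_nth _ false). rewrite size_mkseq size_take size_drop. case: ltnP => h; lia.
  move=> k; rewrite size_mkseq => Hk; rewrite nth_mkseq // nth_take // nth_drop //.
exact: (infix_trans (infix_take _ _) (infix_drop _ _)).
Qed.

Lemma c1 : (7%:R / 3%:R <= (3%:R : rat))%R. Proof. by vm_compute. Qed.
Lemma c2 : (7%:R / 3%:R <= (5%:R / 2%:R : rat))%R. Proof. by vm_compute. Qed.

Definition NS (s : seq bool) := forall x b, subword x s -> size x <= 7 ->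
  (7%:R / 3%:R <= b)%R -> ~ is_power x b.

Section F.
Variable s : seq bool.
Hypothesis Hs : NS s.
Local Notation f := (nth false s).

Lemma F1 t : t + 3 <= size s -> ~~ ((f t == f t.+1) && (f t.+1 == f t.+2)).
Proof.
move=> Ht; apply/negP => /andP [/eqP E1 /eqP E2].
have := factor Ht; rewrite /mkseq /= ?addnS ?addn0 -E2 -E1 => Hf.
by apply: (Hs _ _ Hf _ c1 (pow3 _)).
Qed.

Lemma F2 t : t + 5 <= size s ->
  ~~ [&& f t == f t.+2, f t.+2 == f t.+4 & f t.+1 == f t.+3].
Proof.
move=> Ht; apply/negP => /and3P [/eqP E1 /eqP E2 /eqP E3].
have := factor Ht; rewrite /mkseq /= ?addnS ?addn0 -E2 -E1 -E3 => Hf.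
by apply: (Hs _ _ Hf _ c2 (pow5 _ _)).
Qed.

Lemma F3 t : t + 7 <= size s ->
  ~~ [&& f t == f t.+3, f t.+3 == f t.+4.+2, f t.+1 == f t.+4 & f t.+2 == f t.+4.+1].
Proof.
move=> Ht; apply/negP => /and4P [/eqP E1 /eqP E2 /eqP E3 /eqP E4].
have := factor Ht; rewrite /mkseq /= ?addnS ?addn0 -E2 -E1 -E3 -E4 => Hf.
by apply: (Hs _ _ Hf _ (lexx _) (pow7 _ _ _)).
Qed.
End F.

Lemma boolA (b0 b1 b2 b3 b4 b5 b6 : bool) : b0 != b1 -> b1 == b2 -> b2 != b3 ->
  b3 != b4 -> b4 == b5 -> b5 != b6 ->
  [&& b0 == b3, b3 == b6, b1 == b4 & b2 == b5].
Proof. by case: b0; case: b1; case: b2; case: b3; case: b4; case: b5; case: b6. Qed.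
Lemma boolB (b1 b2 b3 b4 b5 : bool) : b1 != b2 -> b2 != b3 -> b3 != b4 -> b4 != b5 ->
  [&& b1 == b3, b3 == b5 & b2 == b4].
Proof. by case: b1; case: b2; case: b3; case: b4; case: b5. Qed.

Lemma odd_split k d : k <= d -> ~~ odd k -> ~~ odd (d - k) -> ~~ odd d.
Proof. by move=> hk h1 h2; rewrite -(subnKC hk) oddD (negbTE h1) (negbTE h2). Qed.

Lemma parity s : NS s -> forall d t, 0 < t -> t + d + 3 <= size s ->
  nth false s t == nth false s t.+1 ->
  nth false s (t + d) == nth false s (t + d).+1 -> ~~ odd d.
Proof.
move=> Hs.
elim/ltn_ind => d IH t Ht0 Htd B1 B2.
apply/negP => Hd.
have NB k : 0 < k < d -> nth false s (t + k) != nth false s (t + k).+1.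
  move=> /andP [k0 kd]; apply/negP => Bk.
  have h1 := IH k kd t Ht0 ltac:(clear -Htd kd; lia) B1 Bk.
  have h2 : ~~ odd (d - k).
    apply: (IH (d - k) ltac:(clear -k0 kd; lia) (t + k)); [clear -Ht0; lia | clear -Htd kd; lia | exact: Bk |].
    by rewrite -addnA (subnKC (ltnW kd)).
  by move: (@odd_split k d (ltnW kd) h1 h2); rewrite Hd.
case: t Ht0 Htd B1 B2 NB => // t _ Htd B1 B2 NB.
have [d1|d1] := eqVneq d 1.
  subst d; have := @F1 s Hs (t.+1) ltac:(clear -Htd; lia).
  by rewrite B1 /= -addn1 B2.
have [d3|d3] := eqVneq d 3.
  subst d.
  have n1 := NB 1 isT; have n2 := NB 2 isT.
  have a0 := @F1 s Hs (t) ltac:(clear -Htd; lia).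
  have a5 := @F1 s Hs (t.+4) ltac:(clear -Htd; lia).
  have f3 := @F3 s Hs (t) ltac:(clear -Htd; lia).
  rewrite !addSn !addnS !addn0 in n1 n2 B2.
  rewrite B1 andbT in a0. rewrite B2 /= in a5.
  by have := @boolA _ _ _ _ _ _ _ a0 B1 n1 n2 B2 a5; rewrite (negbTE f3).
have d5 : 4 < d.
  move: Hd d1 d3; clear; case: d => [|[|[|[|[|d]]]]] //.
have n1 := NB 1 ltac:(by rewrite /= (ltn_trans _ d5)).
have n2 := NB 2 ltac:(by rewrite /= (ltn_trans _ d5)).
have n3 := NB 3 ltac:(by rewrite /= (ltn_trans _ d5)).
have n4 := NB 4 ltac:(by rewrite /= d5).
have f2 := @F2 s Hs (t.+2) ltac:(clear -Htd d5; lia).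
rewrite !addSn !addnS !addn0 in n1 n2 n3 n4.
by have := @boolB _ _ _ _ _ n1 n2 n3 n4; rewrite (negbTE f2).
Qed.

Fixpoint evens (s : seq bool) : seq bool :=
  match s with a :: _ :: t => a :: evens t | [:: a] => [:: a] | [::] => [::] end.
Fixpoint blocky (s : seq bool) : bool :=
  match s with a :: b :: t => (a != b) && blocky t | [::] => true | _ => false end.

Lemma blocky_mu s : blocky s -> s = mu (evens s).
Proof.
have [n] := ubnP (size s); elim: n s => // n IH [|a [|b t]] //= Hs /andP [ab bt].
rewrite /mu /= -/(mu (evens t)) -IH //; last by move: Hs => /=; lia.
by case: a b ab {Hs} => [] [].
Qed.

Lemma blocky_cat s1 s2 : ~~ odd (size s1) -> blocky (s1 ++ s2) = blocky s1 && blocky s2.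
Proof.
have [n] := ubnP (size s1); elim: n s1 => // n IH [|a [|b t]] //= Hs Ho.
rewrite IH ?andbA //; first by move: Hs => /=; lia.
by move: Ho; rewrite /= negbK.
Qed.

Lemma evens_cat s1 s2 : ~~ odd (size s1) -> evens (s1 ++ s2) = evens s1 ++ evens s2.
Proof.
have [n] := ubnP (size s1); elim: n s1 => // n IH [|a [|b t]] //= Hs Ho.
rewrite IH //; first by move: Hs => /=; lia.
by move: Ho; rewrite /= negbK.
Qed.

Lemma blocky_nth s : ~~ odd (size s) ->
  (forall k, k.*2.+1 < size s -> nth false s k.*2 != nth false s k.*2.+1) -> blocky s.
Proof.
have [n] := ubnP (size s); elim: n s => // n IH [|a [|b t]] //= Hs Ho Hk.
apply/andP; split; first exact: (Hk 0).
apply: IH; first by move: Hs => /=; lia.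
  by move: Ho; rewrite /= negbK.
move=> k Hk'; have := Hk k.+1; rewrite doubleS /=; apply; lia.
Qed.
Definition bad (v : seq bool) t := nth false v t == nth false v t.+1.

Lemma two_bad v t1 t2 : NS v -> 0 < t1 -> t1 <= t2 -> t2 + 3 <= size v ->
  bad v t1 -> bad v t2 -> ~~ odd (t2 - t1).
Proof.
move=> Hs h0 h12 h3 B1 B2.
apply: (@parity v Hs (t2 - t1) t1 h0); rewrite ?subnKC //.
Qed.

Lemma nth_vl w a t : t < size w -> nth false (w ++ a :: w) t = nth false w t.
Proof. by move=> h; rewrite nth_cat h. Qed.

Lemma nth_vr w a t : nth false (w ++ a :: w) ((size w).+1 + t) = nth false w t.
Proof.
rewrite nth_cat ifF; last by apply/negbTE; rewrite -leqNgt; lia.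
by have -> : (size w).+1 + t - size w = t.+1 by lia.
Qed.

Lemma bad_l w a t : t.+1 < size w -> bad w t -> bad (w ++ a :: w) t.
Proof. by move=> h; rewrite /bad !nth_vl // ltnW. Qed.

Lemma bad_r w a t : bad w t -> bad (w ++ a :: w) ((size w).+1 + t).
Proof. by rewrite /bad -addnS !nth_vr. Qed.

Lemma boolC (b0 b1 b2 b3 b4 b5 : bool) :
  ~~ [&& b0 == b2, b2 == b4 & b1 == b3] -> ~~ [&& b1 == b3, b3 == b5 & b2 == b4] ->
  [|| b1 == b2, b2 == b3, b3 == b4 | (b0 == b1) && (b4 == b5)].
Proof. by case: b0; case: b1; case: b2; case: b3; case: b4; case: b5. Qed.

Lemma base j w a : power_free (7%:R / 3%:R)%R w -> size w = ((7 + 2 * j) * 2 ^ 0).-1 ->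
  exists (x : seq bool) (beta : rat),
    [/\ subword x (w ++ a :: w), size x <= 7 * 2 ^ 0,
        (7%:R / 3%:R <= beta)%R & is_power x beta].
Proof.
move=> Hw; rewrite expn0 !muln1 => Hn.
case: (classic (exists x b, [/\ subword x (w ++ a :: w), size x <= 7,
   (7%:R / 3%:R <= b)%R & is_power x b])) => [[x [b [H1 H2 H3 H4]]]|Hno].
  by exists x, b; split.
have Hs : NS (w ++ a :: w) by move=> x b H1 H2 H3 H4; apply: Hno; exists x, b; split.
have Hws : NS w by move=> x b H1 _ H3; apply: Hw.
exfalso.
have f0 := @F2 w Hws 0 ltac:(clear -Hn; lia).
have f1 := @F2 w Hws 1 ltac:(clear -Hn; lia).
have On : odd (size w).+1.
  rewrite Hn; have -> : (7 + 2 * j).-1 = (3 + j).*2 by lia.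
  by rewrite /= odd_double.
have key t : 0 < t -> t <= 3 -> bad w t -> False.
  move=> t0 t3 B.
  have := @two_bad _ t ((size w).+1 + t) Hs t0 ltac:(lia) ltac:(rewrite size_cat /=; clear -Hn t3; lia)
    (@bad_l w a t ltac:(clear -Hn t3; lia) B) (@bad_r w a _ B).
  by rewrite addnK On.
case/or4P: (@boolC _ _ _ _ _ _ f0 f1) => [B|B|B|/andP [B0 B4]].
- exact: (key 1).
- exact: (key 2).
- exact: (key 3).
have := @two_bad _ 4 ((size w).+1 + 0) Hs isT ltac:(lia) ltac:(rewrite size_cat /=; clear -Hn; lia)
    (@bad_l w a 4 ltac:(clear -Hn; lia) B4) (@bad_r w a _ B0).
have -> : (size w).+1 + 0 - 4 = (1 + j).*2.+1 by rewrite Hn; clear; lia.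
by rewrite /= odd_double.
Qed.

Lemma step j i :
  (forall w a, power_free (7%:R / 3%:R)%R w -> size w = ((7 + 2 * j) * 2 ^ i).-1 ->
  exists (x : seq bool) (beta : rat),
    [/\ subword x (w ++ a :: w), size x <= 7 * 2 ^ i,
        (7%:R / 3%:R <= beta)%R & is_power x beta]) ->
  (forall w a, power_free (7%:R / 3%:R)%R w -> size w = ((7 + 2 * j) * 2 ^ i.+1).-1 ->
  exists (x : seq bool) (beta : rat),
    [/\ subword x (w ++ a :: w), size x <= 7 * 2 ^ i.+1,
        (7%:R / 3%:R <= beta)%R & is_power x beta]).
Proof.
move=> IH w a Hw Hn.
set K := (7 + 2 * j) * 2 ^ i.
have K0 : 0 < K by rewrite muln_gt0 expn_gt0.
have K7 : 7 <= K by rewrite /K -{1}(muln1 7) leq_mul // ?expn_gt0 // leq_addr.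
have Hn' : size w = (K.-1).*2.+1 by rewrite Hn expnS mulnCA -/K; clear -K0; lia.
clear Hn.
have fin : forall u b, size u = K.-1 -> infix (mu u) w ->
    infix (mu (u ++ b :: u)) (w ++ a :: w) ->
    exists (x : seq bool) (beta : rat),
    [/\ subword x (w ++ a :: w), size x <= 7 * 2 ^ i.+1,
        (7%:R / 3%:R <= beta)%R & is_power x beta].
  move=> u b Hu Hmu Hz.
  have [x [bt [h1 h2 h3 h4]]] := IH u b (@pf_mu _ _ _ Hw Hmu) Hu.
  exists (mu x), bt; split => //.
  - exact: (infix_trans (mu_infix h1) Hz).
  - rewrite size_mu expnS; move: h2; set P := 2 ^ i; clear; lia.
  - exact: mu_power.
have Hz : forall r c c', size r = (K.-1).*2 -> blocky (r ++ c :: c' :: r) ->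
    infix r w -> infix (r ++ c :: c' :: r) (w ++ a :: w) ->
    exists (x : seq bool) (beta : rat),
    [/\ subword x (w ++ a :: w), size x <= 7 * 2 ^ i.+1,
        (7%:R / 3%:R <= beta)%R & is_power x beta].
  move=> r c c' Hr Hb Hrw Hzv.
  have Ho : ~~ odd (size r) by rewrite Hr odd_double.
  have Hbr : blocky r by move: Hb; rewrite blocky_cat // => /andP [].
  have Er := @blocky_mu _ Hbr.
  have Ez := @blocky_mu _ Hb.
  rewrite evens_cat //= in Ez.
  apply: (fin (evens r) c).
  - by move: Hr; rewrite {1}Er size_mu; clear; lia.
  - by rewrite -Er.
  - by rewrite -Ez.
case: (classic (exists x b, [/\ subword x (w ++ a :: w), size x <= 7,
   (7%:R / 3%:R <= b)%R & is_power x b])) => [[x [b [H1 H2 H3 H4]]]|Hno].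
  exists x, b; split => //; apply: (leq_trans H2).
  by rewrite leq_pmulr // expn_gt0.
have Hs : NS (w ++ a :: w) by move=> x b H1 H2 H3 H4; apply: Hno; exists x, b; split.
have Sv : size (w ++ a :: w) = (size w).*2.+1 by rewrite size_cat /=; lia.
case: (classic (exists t, [/\ 0 < t, t + 3 <= size (w ++ a :: w), ~~ odd t
   & bad (w ++ a :: w) t])) => [[t0 [t00 t03 t0e Bt0]]|Hno2].
-
  have NBodd : forall t, 0 < t -> t + 3 <= size (w ++ a :: w) -> odd t ->
      ~~ bad (w ++ a :: w) t.
    move=> t h0 h3 ho; apply/negP => Bt.
    case: (leqP t0 t) => htt.
      have := @two_bad _ _ _ Hs t00 htt h3 Bt0 Bt.
      by rewrite oddB // ho (negbTE t0e).
    have := @two_bad _ _ _ Hs h0 (ltnW htt) t03 Bt Bt0.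
    by rewrite oddB ?(ltnW htt) // ho (negbTE t0e).
  have PB : forall k, k.*2.+1 < (size w).*2 ->
      nth false (w ++ a :: w) k.*2.+1 != nth false (w ++ a :: w) k.*2.+2.
    move=> k hk.
    case: (leqP (k.*2.+1 + 3) (size (w ++ a :: w))) => hk3.
      by have := NBodd k.*2.+1 isT hk3; rewrite /= odd_double /bad; apply.
    have -> : k.*2.+1 = (size w).+1 + (size w - 2).
      by move: hk hk3; rewrite Sv Hn'; clear -K7; lia.
    rewrite -addnS !nth_vr.
    have O2 : odd (size w - 2).
      have -> : size w - 2 = (K.-1).-1.*2.+1 by rewrite Hn'; clear -K7; lia.
      by rewrite /= odd_double.
    have := NBodd (size w - 2) ltac:(rewrite Hn'; clear -K7; lia)
       ltac:(rewrite Sv Hn'; clear -K7; lia) O2.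
    rewrite /bad !nth_vl //; rewrite Hn'; clear -K7; lia.
  have [w0 [r Ew]] : exists w0 r, w = w0 :: r.
    by case: (w) Hn' => [|w0 r] //; exists w0, r.
  have Sr : size r = (K.-1).*2 by move: Hn'; rewrite Ew /=; clear; lia.
  apply: (Hz r a w0) => //.
  + apply: blocky_nth; first by rewrite size_cat /= Sr; rewrite oddD /= negbK odd_double.
    move=> k hk; have := PB k; rewrite Ew /=; apply.
    by move: hk; rewrite size_cat /= Sr; clear; lia.
  + rewrite Ew; exact: infix_cons.
  + rewrite Ew /=; exact: infix_cons.
-
  have NBeven : forall t, 0 < t -> t + 3 <= size (w ++ a :: w) -> ~~ odd t ->
      ~~ bad (w ++ a :: w) t.
    by move=> t h0 h3 ho; apply/negP => Bt; apply: Hno2; exists t.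
  have PA : forall k, k.*2.+1 < (size w).*2 ->
      nth false (w ++ a :: w) k.*2 != nth false (w ++ a :: w) k.*2.+1.
    case=> [|k] hk.
      have := NBeven ((size w).+1 + 0) ltac:(clear; lia)
        ltac:(rewrite Sv Hn'; clear -K7; lia)
        ltac:(by rewrite addn0 /= Hn' /= odd_double).
      rewrite /bad -addnS !nth_vr /= !nth_vl //; rewrite Hn'; clear -K7; lia.
    apply: NBeven => //; first by move: hk; rewrite Sv; clear; lia.
    by rewrite odd_double.
  have [r [c E]] : exists r c, w = rcons r c.
    by case/lastP: (w) Hn' => [|r c] //; exists r, c.
  have Ev : w ++ a :: w = (r ++ c :: a :: r) ++ [:: c].
    by rewrite E -!cats1 -!catA.
  have Sr : size r = (K.-1).*2 by move: Hn'; rewrite E size_rcons; clear; lia.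
  apply: (Hz r c a) => //.
  + apply: blocky_nth; first by rewrite size_cat /= Sr; rewrite oddD /= negbK odd_double.
    move=> k hk.
    have h1 : k.*2 < size (r ++ c :: a :: r) by exact: ltnW hk.
    have := PA k; rewrite Ev !nth_cat h1 hk; apply.
    move: hk; rewrite size_cat /= Sr E size_rcons Sr; clear; lia.
  + by rewrite E -cats1; exact: prefix_infix.
  + by rewrite Ev; exact: prefix_infix.
Qed.

Theorem lemma5 (i j : nat) (w : seq bool) (a : bool) :
  power_free (7%:R / 3%:R)%R w ->
  size w = ((7 + 2 * j) * 2 ^ i).-1 ->
  exists (x : seq bool) (beta : rat),
    [/\ subword x (w ++ a :: w), size x <= 7 * 2 ^ i,
        (7%:R / 3%:R <= beta)%R & is_power x beta].
Proof.
elim: i w a => [|i IH] w a.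
  exact: base.
exact: step IH w a.
Qed.
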